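(* Every left-invariant parak\''ahler structure on a nilpotent Lie group is Ricci-flat.
   Context: A parak\''ahler structure on a $2n$-manifold consists of a splitting $TM=V\oplus H$ into rank-$n$ distributions and a pseudoriemannian metric $g$ with $g(KX,KY)=-g(X,Y)$ for $K=\mathrm{id}_V-\mathrm{id}_H$, such that the two-form $F(X,Y)=g(KX,Y)$ is parallel for the Levi-Civita connection of $g$. Left-invariant means $V$, $H$ and $g$ are invariant under left translations. *)

(* Defs.v *)
(* Left-invariant geometry on a (simply) connected Lie group
   is encoded by the corresponding data on its Lie algebra R^N. *)
From HB Require Import structures.
From mathcomp Require Import all_boot all_order all_algebra.
From mathcomp Require Import reals.
Set Implicit Arguments. Unset Strict Implicit. Unset Printing Implicit Defensive.
Import Order.TTheory GRing.Theory Num.Theory.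
Local Open Scope ring_scope.

Section LieAlgebraGeometry.
Variables (R : realType) (N : nat).
Local Notation vec := 'rV[R]_N.

Definition lie_br (c : 'I_N -> 'I_N -> vec) (x y : vec) : vec :=
  \sum_(i < N) \sum_(j < N) (x 0 i * y 0 j) *: c i j.

Definition is_lie_algebra (c : 'I_N -> 'I_N -> vec) : Prop :=
  (forall x, lie_br c x x = 0) /\
  (forall x y z, lie_br c x (lie_br c y z) + lie_br c y (lie_br c z x)
                 + lie_br c z (lie_br c x y) = 0).

(* Nilpotent: some k with ad_{x_1} ... ad_{x_k} y = 0 for all x_i, y
   (equivalently the lower central series g^{k+1} vanishes). *)
Definition nilpotent_lie (c : 'I_N -> 'I_N -> vec) : Prop :=
  exists k : nat, forall (xs : seq vec) (y : vec),
    size xs = k -> foldr (lie_br c) y xs = 0.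

Definition bil (G : 'M[R]_N) (x y : vec) : R := (x *m G *m y^T) 0 0.

Definition basis_vec (j : 'I_N) : vec := delta_mx 0 j.

(* Koszul formula for left-invariant fields:
   2 g(nabla_X Y, Z) = g([X,Y],Z) - g([Y,Z],X) + g([Z,X],Y). *)
Definition koszul (c : 'I_N -> 'I_N -> vec) (G : 'M[R]_N) (X Y : vec) : vec :=
  \row_j (bil G (lie_br c X Y) (basis_vec j)
          - bil G (lie_br c Y (basis_vec j)) X
          + bil G (lie_br c (basis_vec j) X) Y).

Definition lc_conn (c : 'I_N -> 'I_N -> vec) (G : 'M[R]_N) (X Y : vec) : vec :=
  2^-1 *: (koszul c G X Y *m invmx G).

Definition curv (c : 'I_N -> 'I_N -> vec) (G : 'M[R]_N) (X Y Z : vec) : vec :=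
  lc_conn c G X (lc_conn c G Y Z) - lc_conn c G Y (lc_conn c G X Z)
  - lc_conn c G (lie_br c X Y) Z.

Definition ricci (c : 'I_N -> 'I_N -> vec) (G : 'M[R]_N) (Y Z : vec) : R :=
  \sum_(i < N) (curv c G (basis_vec i) Y Z) 0 i.

(* Left-invariant parakaehler structure of half-dimension n:
   splitting g = V (+) H into rank-n subspaces, K = id_V - id_H,
   pseudo-Riemannian metric G with g(KX,KY) = -g(X,Y), and
   F(X,Y) = g(KX,Y) parallel for the Levi-Civita connection. *)
Definition parakahler (n : nat) (c : 'I_N -> 'I_N -> vec)
    (G V H K : 'M[R]_N) : Prop :=
  [/\ G^T = G /\ G \in unitmx,
      [/\ \rank V = n, \rank H = n, (V :&: H == (0 : 'M[R]_N))%MS & (1%:M <= V + H)%MS],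
      (forall v : vec, (v <= V)%MS -> v *m K = v) /\
      (forall h : vec, (h <= H)%MS -> h *m K = - h),
      (forall x y : vec, bil G (x *m K) (y *m K) = - bil G x y) &
      (forall X Y Z : vec,
         bil G (lc_conn c G X Y *m K) Z + bil G (Y *m K) (lc_conn c G X Z) = 0)].

End LieAlgebraGeometry.

(* Main.v *)
Require Import Defs.
From HB Require Import structures.
From mathcomp Require Import all_boot all_order all_algebra.
From mathcomp Require Import reals.
From mathcomp Require Import ring lra.
Set Implicit Arguments. Unset Strict Implicit. Unset Printing Implicit Defensive.
Import Order.TTheory GRing.Theory Num.Theory.
Local Open Scope ring_scope.

Section Nilp.
Variable F : fieldType.

Lemma tr_nilp n (A : 'M[F]_n) k : A ^+ k = 0 -> \tr A = 0.
Proof.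
case: n A => [|m] A hA; first by rewrite /mxtrace big_ord0.
pose At := map_mx (@polyC F) A.
pose X : 'M[{poly F}]_m.+1 := 'X%:M.
have hAt : At ^+ k = 0.
  have e : forall j, map_mx (@polyC F) (A ^+ j) = At ^+ j.
    elim=> [|j IH]; first by rewrite !expr0 map_mx1.
    by rewrite !exprS map_mxM IH.
  by rewrite -e hA map_mx0.
have XC : forall B : 'M[{poly F}]_m.+1, X * B = B * X.
  by move=> B; rewrite -!mulmxE /X -scalar_mxC.
pose S := fix S j := if j is j'.+1 then X * S j' + At ^+ j' else (0 : 'M[{poly F}]_m.+1).
have hS : forall j, (X - At) * S j = X ^+ j - At ^+ j.
  elim=> [|j IH] /=; first by rewrite mulr0 !expr0 subrr.
  have e : (X - At) * X = X * (X - At) by rewrite XC.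
  rewrite mulrDr mulrA e -mulrA IH mulrBr mulrBl -!exprS addrA subrK //.
have := hS k; rewrite hAt subr0 => /(congr1 determinant).
rewrite -mulmxE det_mulmx -/(char_poly A).
have -> : X ^+ k = ('X ^+ k)%:M.
  by elim: (k) => [|j IH]; rewrite ?expr0 // !exprS IH -mulmxE -scalar_mxM.
rewrite det_scalar => hdet.
have hdv : char_poly A %| ('X - 0%:P) ^+ (k * m.+1).
  by rewrite subr0 exprM -hdet dvdp_mulr.
have [j _ hj] := dvdp_exp_XsubCP hdv.
move: hj; rewrite subr0 eqp_monic ?char_poly_monic ?monicXn // => /eqP hj.
have hs : size (char_poly A) = m.+2 := size_char_poly A.
move: hs; rewrite hj size_polyXn => -[ej].
have := char_poly_trace A (ltn0Sn m); rewrite hj ej coefXn /= => /eqP.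
rewrite eqn_leq ltnn andbF eq_sym oppr_eq0 => /eqP //.
Qed.
End Nilp.

Lemma nilp_block (T : pzRingType) (P A : T) : P * P = P -> (1 - P) * A * P = 0 ->
  forall j, (P * A * P) ^+ j.+1 = P * A ^+ j.+1 * P.
Proof.
move=> PP h; elim=> [|j IH]; first by rewrite !expr1.
have hAP : P * (A * P) = A * P.
  have : (1 - P) * (A * P) = 0 by rewrite mulrA h.
  by rewrite mulrBl mul1r => /eqP; rewrite subr_eq0 => /eqP <-.
by rewrite [in RHS]exprSr exprSr IH -!mulrA (mulrA P P) PP hAP.
Qed.


Section Abs.
Variables (R : realType) (N : nat).
Local Notation vec := 'rV[R]_N.
Variables (br nab : vec -> vec -> vec) (b : vec -> vec -> R).
Hypothesis br_linl : forall a x y z, br (a *: x + y) z = a *: br x z + br y z.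
Hypothesis br_linr : forall a x y z, br z (a *: x + y) = a *: br z x + br z y.
Hypothesis br_anti : forall x y, br x y = - br y x.
Hypothesis jacobi : forall x y z, br x (br y z) + br y (br z x) + br z (br x y) = 0.
Hypothesis bil_linl : forall a x y z, b (a *: x + y) z = a * b x z + b y z.
Hypothesis bil_linr : forall a x y z, b z (a *: x + y) = a * b z x + b z y.
Hypothesis bil_sym : forall x y, b x y = b y x.
Hypothesis nondeg : forall u w, (forall z, b u z = b w z) -> u = w.
Hypothesis nab_linl : forall a X X' Y, nab (a *: X + X') Y = a *: nab X Y + nab X' Y.
Hypothesis nab_linr : forall a Y Y' X, nab X (a *: Y + Y') = a *: nab X Y + nab X Y'.
Hypothesis metric : forall X Y Z, b (nab X Y) Z + b Y (nab X Z) = 0.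
Hypothesis torsion : forall X Y, nab X Y - nab Y X = br X Y.
Variable G : 'M[R]_N.
Hypothesis bG : forall x y, b x y = (x *m G *m y^T) 0 0.
Hypothesis hGu : G \in unitmx.
Hypothesis hnil : forall w, exists k, forall y, iter k (br w) y = 0.

Definition mx (f : vec -> vec) : 'M[R]_N := \matrix_(i, j) (f (delta_mx 0 i)) 0 j.

Lemma mx_mul f : (forall a x y, f (a *: x + y) = a *: f x + f y) ->
  forall x, x *m mx f = f x.
Proof.
move=> hf x.
have f0 : f 0 = 0.
  have := hf 1 0 0; rewrite !scale1r addr0 => h.
  by apply: (addrI (f 0)); rewrite addr0 -h.
have fD : forall u v, f (u + v) = f u + f v.
  by move=> u v; have := hf 1 u v; rewrite !scale1r.
rewrite [in RHS](row_sum_delta x) (big_morph f fD f0).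
apply/rowP => j; rewrite !mxE summxE; apply: eq_bigr => i _.
by rewrite -[_ *: _]addr0 hf f0 addr0 !mxE.
Qed.

Lemma mx_ext (A B : 'M[R]_N) : (forall x : vec, x *m A = x *m B) -> A = B.
Proof. by move=> h; apply/row_matrixP => i; rewrite !rowE h. Qed.

Lemma bil_ext (A B : 'M[R]_N) :
  (forall x y : vec, (x *m A *m y^T) 0 0 = (x *m B *m y^T) 0 0) -> A = B.
Proof.
move=> h; apply/matrixP => i j; have := h (delta_mx 0 i) (delta_mx 0 j).
by rewrite -!rowE trmx_delta -!colE !mxE.
Qed.

Definition L w := mx (nab w).
Definition A w := mx (br w).

Lemma L_mul w x : x *m L w = nab w x.
Proof. by apply: mx_mul => a u v; apply: nab_linr. Qed.
Lemma A_mul w x : x *m A w = br w x.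
Proof. by apply: mx_mul => a u v; apply: br_linr. Qed.

Lemma trL w : \tr (L w) = 0.
Proof.
have e : L w *m G = - (G *m (L w)^T).
  apply: bil_ext => x y.
  have := metric w x y; rewrite !bG -L_mul -(L_mul w y) trmx_mul.
  have := metric w x y; rewrite !bG -L_mul -(L_mul w y) trmx_mul => h.
  have oe : forall M : 'M[R]_1, (- M) 0 0 = - M 0 0 by move=> M; rewrite mxE.
  rewrite mulmxN mulNmx !mulmxA oe; rewrite !mulmxA in h; lra.
have : \tr (L w) = - \tr (L w).
  rewrite -{1}(mulmxK hGu (L w)) e mxtrace_mulC mulmxN raddfN /= mulmxA mulVmx //.
  by rewrite mul1mx mxtrace_tr.
lra.
Qed.

Definition curvA X Y Z := nab X (nab Y Z) - nab Y (nab X Z) - nab (br X Y) Z.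

Section Lin.
Variable f : vec -> vec -> vec.
Hypothesis fl : forall a x y z, f (a *: x + y) z = a *: f x z + f y z.
Hypothesis fr : forall a x y z, f z (a *: x + y) = a *: f z x + f z y.
Lemma f0l z : f 0 z = 0.
Proof. have h := fl 1 0 0 z; rewrite !scale1r addr0 in h.
by apply: (addrI (f 0 z)); rewrite addr0 -h. Qed.
Lemma f0r z : f z 0 = 0.
Proof. have h := fr 1 0 0 z; rewrite !scale1r addr0 in h.
by apply: (addrI (f z 0)); rewrite addr0 -h. Qed.
Lemma fDl x y z : f (x + y) z = f x z + f y z.
Proof. by have := fl 1 x y z; rewrite !scale1r. Qed.
Lemma fDr x y z : f z (x + y) = f z x + f z y.
Proof. by have := fr 1 x y z; rewrite !scale1r. Qed.
Lemma fZl a x z : f (a *: x) z = a *: f x z.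
Proof. by rewrite -[a *: x]addr0 fl f0l addr0. Qed.
Lemma fZr a x z : f z (a *: x) = a *: f z x.
Proof. by rewrite -[a *: x]addr0 fr f0r addr0. Qed.
Lemma fNl x z : f (- x) z = - f x z.
Proof. by rewrite -scaleN1r fZl scaleN1r. Qed.
Lemma fNr x z : f z (- x) = - f z x.
Proof. by rewrite -scaleN1r fZr scaleN1r. Qed.
End Lin.

Section LinS.
Variable f : vec -> vec -> R.
Hypothesis fl : forall a x y z, f (a *: x + y) z = a * f x z + f y z.
Hypothesis fr : forall a x y z, f z (a *: x + y) = a * f z x + f z y.
Lemma g0l z : f 0 z = 0.
Proof. have h := fl 1 0 0 z; rewrite !scale1r addr0 mul1r in h.
by apply: (addrI (f 0 z)); rewrite addr0 -h. Qed.
Lemma g0r z : f z 0 = 0.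
Proof. have h := fr 1 0 0 z; rewrite !scale1r addr0 mul1r in h.
by apply: (addrI (f z 0)); rewrite addr0 -h. Qed.
Lemma gDl x y z : f (x + y) z = f x z + f y z.
Proof. by have := fl 1 x y z; rewrite !scale1r mul1r. Qed.
Lemma gDr x y z : f z (x + y) = f z x + f z y.
Proof. by have := fr 1 x y z; rewrite !scale1r mul1r. Qed.
Lemma gZl a x z : f (a *: x) z = a * f x z.
Proof. by rewrite -[a *: x]addr0 fl g0l addr0. Qed.
Lemma gZr a x z : f z (a *: x) = a * f z x.
Proof. by rewrite -[a *: x]addr0 fr g0r addr0. Qed.
Lemma gNl x z : f (- x) z = - f x z.
Proof. by rewrite -scaleN1r gZl mulN1r. Qed.
Lemma gNr x z : f z (- x) = - f z x.
Proof. by rewrite -scaleN1r gZr mulN1r. Qed.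
End LinS.

Definition nabDl := fDl nab_linl.
Definition nabDr := fDr nab_linr.
Definition nabNl := fNl nab_linl.
Definition nabNr := fNr nab_linr.
Definition nabZl := fZl nab_linl.
Definition nabZr := fZr nab_linr.
Definition brDl := fDl br_linl.
Definition brDr := fDr br_linr.
Definition brNl := fNl br_linl.
Definition brNr := fNr br_linr.
Definition brZl := fZl br_linl.
Definition brZr := fZr br_linr.
Definition bDl := gDl bil_linl.
Definition bDr := gDr bil_linr.
Definition bNl := gNl bil_linl.
Definition bNr := gNr bil_linr.
Definition bZl := gZl bil_linl.
Definition bZr := gZr bil_linr.

Lemma bianchi X Y Z : curvA X Y Z + curvA Y Z X + curvA Z X Y = 0.
Proof.
have J := jacobi X Y Z.
rewrite -(torsion X (br Y Z)) -(torsion Y (br Z X)) -(torsion Z (br X Y)) in J.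
rewrite -(torsion Y Z) -(torsion Z X) -(torsion X Y) in J.
rewrite /curvA -J.
apply: nondeg => W.
rewrite -(torsion Y Z) -(torsion Z X) -(torsion X Y).
rewrite !(bDl, bNl, nabDr, nabNr, nabDl, nabNl).
ring.
Qed.

Lemma curv_skew X Y u v : b (curvA X Y u) v = - b u (curvA X Y v).
Proof.
rewrite /curvA !(bDl, bNl, bDr, bNr).
have m1 := metric X (nab Y u) v.
have m2 := metric Y u (nab X v).
have m3 := metric Y (nab X u) v.
have m4 := metric X u (nab Y v).
have m5 := metric (br X Y) u v.
have m6 := metric Y (nab X u) v.
have m7 := metric X (nab Y u) v.
lra.
Qed.

Lemma tors' X Y : nab X Y = nab Y X + br X Y.
Proof. by rewrite -(torsion X Y) addrC subrK. Qed.

Section Para.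
Variable K : 'M[R]_N.
Hypothesis hK2 : K *m K = 1%:M.
Hypothesis hKG : forall x y, b (x *m K) (y *m K) = - b x y.
Hypothesis hnK : forall X Y, nab X (Y *m K) = nab X Y *m K.

Lemma iso_p u v : u *m K = u -> v *m K = v -> b u v = 0.
Proof. by move=> hu hv; have := hKG u v; rewrite hu hv; lra. Qed.

Lemma fixK X u : u *m K = u -> nab X u *m K = nab X u.
Proof. by move=> hu; rewrite -hnK hu. Qed.

Lemma brK x a : x *m K = x -> a *m K = a -> br x a *m K = br x a.
Proof. by move=> hx ha; rewrite -torsion mulmxBl !fixK. Qed.

Lemma curvK X Y u : curvA X Y (u *m K) = curvA X Y u *m K.
Proof. by rewrite /curvA !mulmxBl !hnK. Qed.

Lemma key x a v h : x *m K = x -> a *m K = a -> v *m K = v ->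
  b v (curvA x a h) = 0.
Proof.
move=> hx ha hv.
rewrite /curvA !(bDr, bNr).
have m1 := metric x v (nab a h).
have m1' : b (nab x v) (nab a h) = b (nab x v) (nab h a) + b (nab x v) (br a h)
  by rewrite {1}(tors' a h) bDr.
have i1 : b (nab x v) (nab h a) = 0 by apply: iso_p; apply: fixK.
have m2 := metric x v (br a h).
have m2' : b v (nab x (br a h)) = b v (nab (br a h) x) + b v (br x (br a h))
  by rewrite {1}(tors' x (br a h)) bDr.
have i2 : b v (nab (br a h) x) = 0 by apply: iso_p => //; apply: fixK.
have m3 := metric a v (nab x h).
have m3' : b (nab a v) (nab x h) = b (nab a v) (nab h x) + b (nab a v) (br x h)
  by rewrite {1}(tors' x h) bDr.
have i3 : b (nab a v) (nab h x) = 0 by apply: iso_p; apply: fixK.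
have m4 := metric a v (br x h).
have m4' : b v (nab a (br x h)) = b v (nab (br x h) a) + b v (br a (br x h))
  by rewrite {1}(tors' a (br x h)) bDr.
have i4 : b v (nab (br x h) a) = 0 by apply: iso_p => //; apply: fixK.
have m5' : b v (nab (br x a) h) = b v (nab h (br x a)) + b v (br (br x a) h)
  by rewrite {1}(tors' (br x a) h) bDr.
have i5 : b v (nab h (br x a)) = 0 by apply: iso_p => //; apply: fixK; apply: brK.
have J := congr1 (b v) (jacobi x a h).
rewrite (br_anti h x) (br_anti h (br x a)) brNr !(bDr, bNr) g0r in J; last exact: bil_linr.
lra.
Qed.

Lemma two_neq0 : (2 : R) != 0. Proof. by rewrite pnatr_eq0. Qed.

Definition P := 2^-1 *: (1%:M + K).
Definition Q := 2^-1 *: (1%:M - K).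

Lemma PK : P *m K = P.
Proof. by rewrite /P -scalemxAl mulmxDl mul1mx hK2 addrC. Qed.
Lemma KP : K *m P = P.
Proof. by rewrite /P -scalemxAr mulmxDr mulmx1 hK2 addrC. Qed.
Lemma QK : Q *m K = - Q.
Proof. by rewrite /Q -scalemxAl mulmxBl mul1mx hK2 -scalerN opprB. Qed.
Lemma KQ : K *m Q = - Q.
Proof. by rewrite /Q -scalemxAr mulmxBr mulmx1 hK2 -scalerN opprB. Qed.
Lemma PQ1 : P + Q = 1%:M.
Proof.
rewrite /P /Q -scalerDr addrACA subrr addr0 -mulr2n -scaler_nat scalerA.
by rewrite mulVf ?two_neq0 // scale1r.
Qed.
Lemma fixP (u : vec) : u *m K = u -> u *m P = u.
Proof.
move=> hu; rewrite /P -scalemxAr mulmxDr mulmx1 hu -mulr2n -scaler_nat scalerA.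
by rewrite mulVf ?two_neq0 // scale1r.
Qed.
Lemma negP (u : vec) : u *m K = - u -> u *m P = 0.
Proof. by move=> hu; rewrite /P -scalemxAr mulmxDr mulmx1 hu subrr scaler0. Qed.
Lemma fixQ (u : vec) : u *m K = u -> u *m Q = 0.
Proof. by move=> hu; rewrite /Q -scalemxAr mulmxBr mulmx1 hu subrr scaler0. Qed.
Lemma xPK (x : vec) : x *m P *m K = x *m P.
Proof. by rewrite -mulmxA PK. Qed.
Lemma xQK (x : vec) : x *m Q *m K = - (x *m Q).
Proof. by rewrite -mulmxA QK mulmxN. Qed.
Lemma splitPQ (x : vec) : x = x *m P + x *m Q.
Proof. by rewrite -mulmxDr PQ1 mulmx1. Qed.

Lemma iso_m u v : u *m K = - u -> v *m K = - v -> b u v = 0.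
Proof. by move=> hu hv; have := hKG u v; rewrite hu hv bNl bNr; lra. Qed.

Lemma negK X u : u *m K = - u -> nab X u *m K = - nab X u.
Proof. by move=> hu; rewrite -hnK hu nabNr. Qed.

Lemma curvDr X Y u v : curvA X Y (u + v) = curvA X Y u + curvA X Y v.
Proof.
apply: nondeg => z; rewrite /curvA !(nabDr, bDl, bNl).
ring.
Qed.

Lemma curvNr X Y u : curvA X Y (- u) = - curvA X Y u.
Proof.
apply: nondeg => z; rewrite /curvA !(nabNr, bDl, bNl).
ring.
Qed.

Lemma flat x a W : x *m K = x -> a *m K = a -> curvA x a W = 0.
Proof.
move=> hx ha.
have hV : forall v, v *m K = v -> curvA x a v = 0.
  move=> v hv; apply: nondeg => z.
  by rewrite curv_skew (key _ hx ha hv) oppr0 (g0l bil_linl).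
rewrite (splitPQ W) curvDr (hV (W *m P)); last exact: xPK.
rewrite add0r.
apply: nondeg => z; rewrite (g0l bil_linl) (splitPQ z) bDr.
rewrite (curv_skew _ _ _ (z *m P)) (hV (z *m P)); last exact: xPK.
rewrite (g0r bil_linr) oppr0 add0r.
apply: iso_m; last exact: xQK.
by rewrite -curvK xQK curvNr.
Qed.
Lemma PP : P *m P = P.
Proof.
rewrite {2}/P -scalemxAr mulmxDr mulmx1 PK -mulr2n -scaler_nat scalerA.
by rewrite mulVf ?two_neq0 // scale1r.
Qed.
Lemma QP : Q *m P = 0.
Proof. by rewrite /Q -scalemxAl mulmxBl mul1mx KP subrr scaler0. Qed.

Lemma LK w : K *m L w = L w *m K.
Proof. by apply: mx_ext => x; rewrite !mulmxA !L_mul hnK. Qed.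
Lemma LP w : P *m L w = L w *m P.
Proof. by rewrite /P -scalemxAl -scalemxAr mulmxDl mulmxDr mul1mx mulmx1 LK. Qed.
Lemma LQ w : Q *m L w = L w *m Q.
Proof. by rewrite /Q -scalemxAl -scalemxAr mulmxBl mulmxBr mul1mx mulmx1 LK. Qed.

Lemma Apow w k y : y *m (A w) ^+ k = iter k (br w) y.
Proof.
elim: k => [|k IH]; first by rewrite expr0 mulmx1.
by rewrite exprSr -mulmxE mulmxA IH A_mul.
Qed.

Lemma Anil w : exists k, (A w) ^+ k = 0.
Proof.
have [k hk] := hnil w; exists k; apply: mx_ext => x.
by rewrite Apow hk mulmx0.
Qed.

Lemma trX w : w *m K = - w -> \tr (P *m L w) = 0.
Proof.
move=> hw.
have e1 : L w *m P = A w *m P.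
  apply: mx_ext => x; rewrite !mulmxA L_mul A_mul -torsion mulmxBl.
  by rewrite (negP (negK _ hw)) subr0.
have e2 : Q *m A w *m P = 0.
  by rewrite -mulmxA -e1 mulmxA LQ -mulmxA QP mulmx0.
have -> : \tr (P *m L w) = \tr (P *m A w *m P).
  by rewrite mxtrace_mulC e1 -{1}PP mulmxA mxtrace_mulC mulmxA.
have [k hk] := Anil w.
apply: (tr_nilp (k := k.+1)).
have hQ : (1 : 'M[R]_N) - P = Q.
  by apply/eqP; rewrite subr_eq addrC PQ1.
rewrite !mulmxE nilp_block.
- by rewrite exprSr hk mul0r mulr0 mul0r.
- by rewrite -mulmxE PP.
- by rewrite hQ -!mulmxE e2.
Qed.

End Para.

Definition ricA Y Z := \sum_i (curvA (delta_mx 0 i) Y Z) 0 i.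

Lemma LD u v : L (u + v) = L u + L v.
Proof. by apply: mx_ext => x; rewrite mulmxDr !L_mul nabDl. Qed.

Lemma curv_linl a x x' Y Z :
  curvA (a *: x + x') Y Z = a *: curvA x Y Z + curvA x' Y Z.
Proof.
apply: nondeg => w; rewrite /curvA br_linl !nab_linl nab_linr.
rewrite !(bDl, bNl, bZl); ring.
Qed.

Section Para2.
Variable K : 'M[R]_N.
Hypothesis hK2 : K *m K = 1%:M.
Hypothesis hKG : forall x y, b (x *m K) (y *m K) = - b x y.
Hypothesis hnK : forall X Y, nab X (Y *m K) = nab X Y *m K.

Lemma hK2' : (- K) *m (- K) = 1%:M.
Proof. by rewrite mulmxN mulNmx opprK. Qed.
Lemma hKG' x y : b (x *m - K) (y *m - K) = - b x y.
Proof. by rewrite !mulmxN bNl bNr opprK. Qed.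
Lemma hnK' X Y : nab X (Y *m - K) = nab X Y *m - K.
Proof. by rewrite !mulmxN nabNr hnK. Qed.

Lemma trPL w : \tr (P K *m L w) = 0.
Proof.
rewrite (splitPQ K w) LD mulmxDr mxtraceD.
rewrite (trX hK2 hnK (xQK hK2 w)) addr0.
have e : \tr (L (w *m P K)) = \tr (P K *m L (w *m P K)) + \tr (Q K *m L (w *m P K)).
  by rewrite -mxtraceD -mulmxDl PQ1 mul1mx.
have h : (w *m P K) *m - K = - (w *m P K) by rewrite mulmxN xPK.
have := trX hK2' hnK' h; rewrite trL in e.
rewrite /P in e * => h2; rewrite -h2 in e; lra.
Qed.

Lemma core Y a : a *m K = a -> ricA Y a = 0.
Proof.
move=> ha.
pose M := mx (fun x => curvA x Y a).
have hM : forall x, x *m M = curvA x Y a.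
  by apply: mx_mul => al u v; apply: curv_linl.
have -> : ricA Y a = \tr M by apply: eq_bigr => i _; rewrite !mxE.
have MP : M *m P K = M.
  apply: mx_ext => x; rewrite mulmxA hM fixP //.
  by rewrite -curvK // ha.
have PM : P K *m M = - (P K *m (L a *m L Y - L Y *m L a - L (br Y a))).
  apply: mx_ext => x; rewrite mulmxA hM mulmxN mulmxA.
  have hb := bianchi (x *m P K) Y a.
  rewrite (flat hK2 hKG hnK Y ha (xPK hK2 x)) addr0 in hb.
  have hc : curvA (x *m P K) Y a = - curvA Y a (x *m P K).
    by apply/eqP; rewrite -addr_eq0 hb.
  rewrite hc; congr (- _).
  by rewrite !mulmxBr !mulmxA !L_mul /curvA.
rewrite -MP mxtrace_mulC PM raddfN /= !mulmxBr !mxtraceD !raddfN /=.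
rewrite trPL mxtrace_mulC -mulmxA mxtrace_mulC mulmxA LP //.
by rewrite subrr subr0 oppr0.
Qed.

End Para2.

Lemma ric0 (K : 'M[R]_N) : K *m K = 1%:M ->
  (forall x y, b (x *m K) (y *m K) = - b x y) ->
  (forall X Y, nab X (Y *m K) = nab X Y *m K) ->
  forall Y Z, ricA Y Z = 0.
Proof.
move=> hK2 hKG hnK Y Z.
have eD : ricA Y Z = ricA Y (Z *m P K) + ricA Y (Z *m Q K).
  rewrite /ricA -big_split; apply: eq_bigr => i _ /=.
  by rewrite {1}(splitPQ K Z) curvDr mxE.
rewrite eD (core hK2 hKG hnK) ?add0r; last exact: xPK.
apply: (core (hK2' hK2) (hKG' hKG) (hnK' hnK)).
by rewrite mulmxN (xQK hK2) opprK.
Qed.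

End Abs.


Module C.
Section Main.
Variables (R : realType) (N : nat) (c : 'I_N -> 'I_N -> 'rV[R]_N) (G : 'M[R]_N).
Local Notation vec := 'rV[R]_N.
Hypothesis hL : is_lie_algebra c.
Hypothesis hGs : G^T = G.
Hypothesis hGu : G \in unitmx.
Local Notation br := (lie_br c).
Local Notation nab := (lc_conn c G).
Local Notation b := (bil G).
Local Notation e := (@basis_vec R N).

Lemma br_linl a x y z : br (a *: x + y) z = a *: br x z + br y z.
Proof.
rewrite /lie_br scaler_sumr -big_split; apply: eq_bigr => i _.
rewrite scaler_sumr -big_split; apply: eq_bigr => j _.
rewrite !mxE /= scalerA -scalerDl; congr (_ *: _); ring.
Qed.

Lemma br_linr a x y z : br z (a *: x + y) = a *: br z x + br z y.
Proof.
rewrite /lie_br scaler_sumr -big_split; apply: eq_bigr => i _.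
rewrite scaler_sumr -big_split; apply: eq_bigr => j _.
rewrite !mxE /= scalerA -scalerDl; congr (_ *: _); ring.
Qed.

Lemma br0l z : br 0 z = 0.
Proof. have h := br_linl 1 0 0 z; rewrite !scale1r addr0 in h.
by apply: (addrI (br 0 z)); rewrite addr0 -h. Qed.
Lemma br0r z : br z 0 = 0.
Proof. have h := br_linr 1 0 0 z; rewrite !scale1r addr0 in h.
by apply: (addrI (br z 0)); rewrite addr0 -h. Qed.
Lemma brDl x y z : br (x + y) z = br x z + br y z.
Proof. by have := br_linl 1 x y z; rewrite !scale1r. Qed.
Lemma brDr x y z : br z (x + y) = br z x + br z y.
Proof. by have := br_linr 1 x y z; rewrite !scale1r. Qed.
Lemma brZl a x z : br (a *: x) z = a *: br x z.
Proof. by rewrite -[a *: x]addr0 br_linl br0l addr0. Qed.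
Lemma brZr a x z : br z (a *: x) = a *: br z x.
Proof. by rewrite -[a *: x]addr0 br_linr br0r addr0. Qed.
Lemma brNl x z : br (- x) z = - br x z.
Proof. by rewrite -scaleN1r brZl scaleN1r. Qed.
Lemma brNr x z : br z (- x) = - br z x.
Proof. by rewrite -scaleN1r brZr scaleN1r. Qed.

Lemma br_anti x y : br x y = - br y x.
Proof.
have := (proj1 hL) (x + y); rewrite brDl !brDr !(proj1 hL) add0r addr0.
by move/eqP; rewrite addr_eq0 => /eqP.
Qed.

Lemma jacobi x y z : br x (br y z) + br y (br z x) + br z (br x y) = 0.
Proof. exact: (proj2 hL). Qed.

Lemma bil_linl a x y z : b (a *: x + y) z = a * b x z + b y z.
Proof. by rewrite /bil !mulmxDl -!scalemxAl !mxE. Qed.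
Lemma bil_linr a x y z : b z (a *: x + y) = a * b z x + b z y.
Proof. by rewrite /bil linearD linearZ /= mulmxDr -!scalemxAr !mxE. Qed.
Lemma bilDl x y z : b (x + y) z = b x z + b y z.
Proof. by have := bil_linl 1 x y z; rewrite !scale1r mul1r. Qed.
Lemma bilDr x y z : b z (x + y) = b z x + b z y.
Proof. by have := bil_linr 1 x y z; rewrite !scale1r mul1r. Qed.
Lemma bilZl a x z : b (a *: x) z = a * b x z.
Proof. by rewrite /bil -!scalemxAl !mxE. Qed.
Lemma bilZr a x z : b z (a *: x) = a * b z x.
Proof. by rewrite /bil linearZ /= -!scalemxAr !mxE. Qed.
Lemma bilNl x z : b (- x) z = - b x z.
Proof. by rewrite -scaleN1r bilZl mulN1r. Qed.
Lemma bilNr x z : b z (- x) = - b z x.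
Proof. by rewrite -scaleN1r bilZr mulN1r. Qed.
Lemma bilBl x y z : b (x - y) z = b x z - b y z.
Proof. by rewrite bilDl bilNl. Qed.
Lemma bilBr x y z : b z (x - y) = b z x - b z y.
Proof. by rewrite bilDr bilNr. Qed.
Lemma bil0l z : b 0 z = 0.
Proof. by rewrite /bil !mul0mx mxE. Qed.

Lemma bil_sym x y : b x y = b y x.
Proof.
rewrite /bil; have -> : (x *m G *m y^T) 0 0 = ((x *m G *m y^T)^T) 0 0 by rewrite [RHS]mxE.
by rewrite !trmx_mul trmxK hGs mulmxA.
Qed.

Lemma bil_e u j : b u (e j) = (u *m G) 0 j.
Proof.
rewrite /bil /basis_vec trmx_delta -colE mxE //.
Qed.

Lemma nondeg u w : (forall z, b u z = b w z) -> u = w.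
Proof.
move=> h; have : u *m G = w *m G.
  by apply/rowP => j; rewrite -!bil_e.
by move/(congr1 (mulmx^~ (invmx G))); rewrite !mulmxK.
Qed.


Lemma scalar_lin (phi : vec -> R) :
  (forall a x y, phi (a *: x + y) = a * phi x + phi y) ->
  forall x, phi x = \sum_j x 0 j * phi (e j).
Proof.
move=> hp x.
have p0 : phi 0 = 0.
  have := hp 1 0 0; rewrite scale1r addr0 mul1r => h.
  by apply: (addrI (phi 0)); rewrite addr0 -h.
have pD : forall u v, phi (u + v) = phi u + phi v.
  by move=> u v; rewrite -[u]scale1r hp mul1r scale1r.
rewrite {1}(row_sum_delta x) (big_morph phi pD p0); apply: eq_bigr => j _.
by rewrite -[_ *: _]addr0 hp p0 addr0.
Qed.

Lemma kz X Y Z :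
  b (nab X Y) Z * 2 = b (br X Y) Z - b (br Y Z) X + b (br Z X) Y.
Proof.
rewrite /lc_conn bilZl {1}/bil mulmxKV // mxE.
pose phi W := b (br X Y) W - b (br Y W) X + b (br W X) Y.
have hp : forall a x y, phi (a *: x + y) = a * phi x + phi y.
  by move=> a x y; rewrite /phi br_linr br_linl bil_linr !bil_linl; ring.
rewrite -/(phi Z) (scalar_lin hp Z).
have -> : \sum_j koszul c G X Y 0 j * Z^T j 0 = \sum_j Z 0 j * phi (e j).
  by apply: eq_bigr => j _; rewrite !mxE mulrC.
by rewrite mulrC mulrA mulfV ?mul1r // pnatr_eq0.
Qed.

Lemma two_neq0 : (2 : R) != 0. Proof. by rewrite pnatr_eq0. Qed.

Lemma nondeg2 u w : (forall z, b u z * 2 = b w z * 2) -> u = w.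
Proof. by move=> h; apply: nondeg => z; apply: (mulIf two_neq0). Qed.

Lemma nab_linr a X Y Y' : nab X (a *: Y + Y') = a *: nab X Y + nab X Y'.
Proof.
apply: nondeg2 => Z; rewrite bil_linl mulrDl -mulrA !kz.
rewrite br_linr br_linl !bil_linl bil_linr; ring.
Qed.

Lemma nab_linl a X X' Y : nab (a *: X + X') Y = a *: nab X Y + nab X' Y.
Proof.
apply: nondeg2 => Z; rewrite bil_linl mulrDl -mulrA !kz.
rewrite br_linr br_linl !bil_linl bil_linr; ring.
Qed.

Lemma metric X Y Z : b (nab X Y) Z + b Y (nab X Z) = 0.
Proof.
apply: (mulIf two_neq0); rewrite mul0r mulrDl [b Y _]bil_sym !kz.
rewrite (br_anti Z Y) (br_anti Y X) (br_anti X Z) !bilNl; ring.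
Qed.

Lemma torsion X Y : nab X Y - nab Y X = br X Y.
Proof.
apply: nondeg2 => Z; rewrite bilBl mulrBl !kz.
rewrite (br_anti Y X) (br_anti X Z) (br_anti Z Y) !bilNl; ring.
Qed.

End Main.

End C.


Lemma foldr_nseq_iter (R : realType) (N : nat) (c : 'I_N -> 'I_N -> 'rV[R]_N) k w y :
  foldr (lie_br c) y (nseq k w) = iter k (lie_br c w) y.
Proof. by elim: k => [|k IH] //=; rewrite IH. Qed.

Theorem corollary8p2 (R : realType) (n : nat)
    (c : 'I_(n + n) -> 'I_(n + n) -> 'rV[R]_(n + n))
    (G V H K : 'M[R]_(n + n)) :
  is_lie_algebra c -> nilpotent_lie c -> parakahler n c G V H K ->
  forall Y Z : 'rV[R]_(n + n), ricci c G Y Z = 0.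
Proof.
move=> hL [k hk] [[hGs hGu] [_ _ _ hsum] [hVf hHn] hKG hpar] Y Z.
have hK2 : K *m K = 1%:M.
  apply: (mx_ext (R := R)) => x; rewrite mulmx1 mulmxA.
  have : (x <= V + H)%MS by apply: submx_trans (submx1 x) hsum.
  case/sub_addsmxP => u ->.
  rewrite !mulmxDl (hVf _ (submxMl _ _)) (hHn _ (submxMl _ _)).
  by rewrite mulNmx (hVf _ (submxMl _ _)) (hHn _ (submxMl _ _)) opprK.
have hnK : forall X Y0, lc_conn c G X (Y0 *m K) = lc_conn c G X Y0 *m K.
  move=> X Y0; apply: (C.nondeg hGu) => W.
  have h1 := hpar X Y0 W.
  have h2 := C.metric hL hGs hGu X (Y0 *m K) W.
  lra.
have hnil : forall w, exists k, forall y, iter k (lie_br c w) y = 0.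
  move=> w; exists k => y; rewrite -foldr_nseq_iter; apply: hk.
  by rewrite size_nseq.
apply: (ric0 (C.br_linl c) (C.br_linr c) (C.br_anti hL) (C.jacobi hL)
  (C.bil_linl G) (C.bil_linr G) (C.nondeg hGu)
  (C.nab_linl c hGu) (fun a Y1 Y2 X => C.nab_linr c hGu a X Y1 Y2)
  (C.metric hL hGs hGu) (C.torsion hL hGu) (G := G) _ hGu hnil hK2 hKG hnK).
by [].
Qed.
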